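(* Let $n\ge1$, $\lambda_s>0$, $\lambda>0$ and $n_0\ge 3$. Then for every node $i\in\{1,\dots,n_0\}$, $$\Delta^{r(n_0)}_1\le \Delta^{\ell(n_0)}_i\le 2\,\Delta^{r(n_0)}_1 .$$
   Context: Version-age model. A gossip network on a finite node set $\mathcal N$ is specified by source rates $\lambda_{0j}>0$ ($j\in\mathcal N$) and gossip rates $\lambda_{ij}\ge 0$ for ordered pairs $i\neq j$ in $\mathcal N$ ($\lambda_{ij}$ is the rate at which node $i$ sends updates to node $j$); $\lambda_s>0$ is the source's own update rate. For nonempty $S\subseteq\mathcal N$ let $N(S)=\{i\in\mathcal N\setminus S:\ \sum_{j\in S}\lambda_{ij}>0\}$. The version ages $\Delta_S$ ($\emptyset\neq S\subseteq\mathcal N$) are the numbers defined by $$\Delta_S=\frac{\lambda_s+\sum_{i\in N(S)}\big(\sum_{j\in S}\lambda_{ij}\big)\Delta_{S\cup\{i\}}}{\sum_{j\in S}\lambda_{0j}+\sum_{i\in N(S)}\sum_{j\in S}\lambda_{ij}},$$ which is well defined by downward induction on $|S|$. Write $\Delta_i=\Delta_{\{i\}}$. Line network $L(n_0)$ with parameter $n$: node set $\{1,\dots,n_0\}$, $\lambda_{0j}=\lambda/n$ for all $j$, $\lambda_{i,i+1}=\lambda_{i+1,i}=\lambda/2$ for $1\le i\le n_0-1$, all other $\lambda_{ij}=0$; $\Delta^{\ell(n_0)}_i$ denotes $\Delta_i$ in it. Ring network $R(n_0)$ ($n_0\ge3$) with parameter $n$: the same as $L(n_0)$ plus $\lambda_{n_0,1}=\lambda_{1,n_0}=\lambda/2$;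 $\Delta^{r(n_0)}_i$ denotes $\Delta_i$ in it. *)

(* Defs.v *)
From mathcomp Require Import all_boot all_order all_algebra.
Set Implicit Arguments. Unset Strict Implicit. Unset Printing Implicit Defensive.
Import Order.TTheory GRing.Theory Num.Theory.
Local Open Scope ring_scope.

Section VersionAge.
Variables (R : realFieldType) (T : finType).
(* l0 j = lambda_{0j} (source -> j), lg i j = lambda_{ij} (i -> j), ls = lambda_s *)
Variables (l0 : T -> R) (lg : T -> T -> R) (ls : R).

Definition rateInto (i : T) (S : {set T}) : R := \sum_(j in S) lg i j.

Definition nbr (S : {set T}) : {set T} :=
  [set i | (i \notin S) && (0 < rateInto i S)].

(* The recursion of the version-age equations, with fuel k; the fuel decreases
   by one each time S grows by one element. *)
Fixpoint ageAux (k : nat) (S : {set T}) : R :=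
  match k with
  | 0%N => 0
  | k'.+1 =>
      (ls + \sum_(i in nbr S) rateInto i S * ageAux k' (i |: S)) /
      (\sum_(j in S) l0 j + \sum_(i in nbr S) rateInto i S)
  end.

(* Delta_S, defined by downward induction on |S|: fuel #|T| - #|S| + 1
   suffices (for S = the whole node set, N(S) is empty). *)
Definition versionAge (S : {set T}) : R := ageAux (#|T| - #|S|).+1 S.

Definition nodeAge (i : T) : R := versionAge [set i].
End VersionAge.

(* Line network L(n0) with parameter n; nodes 1..n0 are represented by
   the ordinals 0..n0-1 of 'I_n0. *)
Definition line_l0 (R : realFieldType) (n n0 : nat) (lam : R) : 'I_n0 -> R :=
  fun _ => lam / n%:R.

Definition line_lg (R : realFieldType) (n0 : nat) (lam : R) : 'I_n0 -> 'I_n0 -> R :=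
  fun i j => if ((i : nat).+1 == j) || ((j : nat).+1 == i) then lam / 2 else 0.

Definition ring_lg (R : realFieldType) (n0 : nat) (lam : R) : 'I_n0 -> 'I_n0 -> R :=
  fun i j =>
    if [|| (i : nat).+1 == j, (j : nat).+1 == i,
           ((i : nat) == n0.-1) && ((j : nat) == 0%N)
         | ((j : nat) == n0.-1) && ((i : nat) == 0%N)]
    then lam / 2 else 0.

Definition lineAge (R : realFieldType) (n n0 : nat) (ls lam : R) (i : 'I_n0) : R :=
  nodeAge (@line_l0 R n n0 lam) (@line_lg R n0 lam) ls i.

Definition ringAge (R : realFieldType) (n n0 : nat) (ls lam : R) (i : 'I_n0) : R :=
  nodeAge (@line_l0 R n n0 lam) (@ring_lg R n0 lam) ls i.

(* Main.v *)
Require Import Defs.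
From mathcomp Require Import all_boot all_order all_algebra.
From mathcomp Require Import zify ring lra.
Set Implicit Arguments. Unset Strict Implicit. Unset Printing Implicit Defensive.
Import Order.TTheory GRing.Theory Num.Theory.
Local Open Scope ring_scope.


Lemma key (R : realFieldType) (ls s x R1 R2 : R) : 0 < s -> 0 <= R1 -> R1 <= R2 -> 0 <= x -> x * s <= ls ->
  (ls + R2 * x) / (s + R2) <= (ls + R1 * x) / (s + R1).
Proof.
move=> hs h1 h12 hx hxs.
have h2 : 0 < s + R2 by lra.
have h1' : 0 < s + R1 by lra.
rewrite ler_pdivrMr // mulrAC ler_pdivlMr //.
nra.
Qed.

Section Generic.
Variables (R : realFieldType) (T : finType) (c : R) (lg : T -> T -> R) (ls : R).
Hypotheses (hc : 0 < c) (hls : 0 < ls) (hlg : forall i j, 0 <= lg i j).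

Local Notation VA S := (versionAge (fun _ : T => c) lg ls S).
Definition Rt (S : {set T}) := \sum_(i in ~: S) rateInto lg i S.

Lemma rate_ge0 i S : 0 <= rateInto lg i S.
Proof. by apply: sumr_ge0 => j _. Qed.

Lemma nbr_sum S (F : T -> R) :
  \sum_(i in nbr lg S) rateInto lg i S * F i = \sum_(i in ~: S) rateInto lg i S * F i.
Proof.
rewrite big_mkcond [RHS]big_mkcond; apply: eq_bigr => i _.
rewrite /nbr !inE lt0r rate_ge0 andbT.
case: (i \in S) => //=; case: eqP => [->|] //; by rewrite mul0r.
Qed.

Lemma VA_unfold S : VA S =
  (ls + \sum_(i in ~: S) rateInto lg i S * VA (i |: S)) / (#|S|%:R * c + Rt S).
Proof.
rewrite {1}/versionAge /= nbr_sum.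
have -> : \sum_(i in nbr lg S) rateInto lg i S = Rt S.
  rewrite /Rt big_mkcond [RHS]big_mkcond; apply: eq_bigr => i _.
  rewrite /nbr !inE lt0r rate_ge0 andbT.
  by case: (i \in S) => //=; case: eqP => [->|].
rewrite sumr_const.
have -> : c *+ #|S| = #|S|%:R * c by rewrite mulr_natl.
congr ((_ + _) / _); apply: eq_bigr => i; rewrite inE => hi.
rewrite /versionAge cardsU1 hi.
have := max_card (i |: S); rewrite cardsU1 hi => hle.
by have -> : (#|T| - #|S| = (#|T| - (1 + #|S|)).+1)%N by lia.
Qed.

Fixpoint G (rho : R) (m k : nat) : R :=
  match m with
  | 0%N => ls / (k%:R * c)
  | m'.+1 => (ls + rho * G rho m' k.+1) / (k%:R * c + rho)
  end.
Definition F rho k := G rho (#|T| - k) k.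

Lemma G_bounds (rho : R) m k : 0 < rho -> (0 < k)%N ->
  0 <= G rho m k /\ G rho m k * (k%:R * c) <= ls.
Proof.
move=> hr; elim: m k => [|m IH] k hk /=.
  have hkc : 0 < k%:R * c by rewrite mulr_gt0 // ltr0n.
  split; first by rewrite divr_ge0 // ltW.
  by rewrite divfK ?gt_eqF.
have hkr : 0 < k%:R :> R by rewrite ltr0n.
have hkc : 0 < k%:R * c + rho by rewrite addr_gt0 // mulr_gt0.
have [g0 gl] := IH k.+1 isT.
set g := G rho m k.+1 in g0 gl *.
have hk1 : (k.+1)%:R = k%:R + 1 :> R by rewrite -addn1 natrD.
rewrite hk1 in gl.
have gl' : g * (k%:R * c) <= ls.
  have := mulr_ge0 g0 (ltW hc); nra.
split.
  apply: divr_ge0; last exact: ltW.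
  have := mulr_ge0 (ltW hr) g0; move=> h; apply: addr_ge0 => //; exact: ltW.
rewrite mulrAC ler_pdivrMr //.
have := ler_wpM2l (ltW hr) gl'; nra.
Qed.

Lemma G_double (rho : R) m k : 0 < rho -> (0 < k)%N ->
  G rho m k <= 2 * G (2 * rho) m k.
Proof.
move=> hr; elim: m k => [|m IH] k hk /=.
  have hkc : 0 < k%:R * c by rewrite mulr_gt0 // ltr0n.
  have : 0 <= ls / (k%:R * c) by rewrite divr_ge0 // ltW.
  lra.
have hkr : 0 < k%:R :> R by rewrite ltr0n.
have hkc : 0 < k%:R * c + rho by rewrite addr_gt0 // mulr_gt0.
have hkc2 : 0 < k%:R * c + 2 * rho by rewrite addr_gt0 // ?mulr_gt0.
have h := IH k.+1 isT.
have h2r : 0 < 2 * rho by rewrite mulr_gt0.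
have [f0 _] := G_bounds m (k:=k.+1) h2r isT.
have [g0 _] := G_bounds m (k:=k.+1) hr isT.
set g := G rho m k.+1 in h g0 *.
set f := G (2 * rho) m k.+1 in h f0 *.
rewrite mulrA ler_pdivrMr // mulrAC ler_pdivlMr //.
have hkc0 : 0 <= k%:R * c by rewrite mulr_ge0 ?ltW.
have hA : ls + rho * g <= ls + 2 * rho * f.
  have := ler_wpM2l (ltW hr) h; lra.
have h1 := ler_wpM2r (ltW hkc2) hA.
have hA0 : 0 <= ls + 2 * rho * f.
  by apply: addr_ge0; [exact: ltW | exact: mulr_ge0 (ltW h2r) f0].
have := mulr_ge0 hA0 hkc0.
move=> hh; apply: (le_trans h1); nra.
Qed.

Lemma bounds (P : {set T} -> Prop) (rlo rhi : R) :
  0 < rlo -> rlo <= rhi ->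
  (forall S, P S -> (0 < #|S|)%N) ->
  (forall S i, P S -> i \notin S -> 0 < rateInto lg i S -> P (i |: S)) ->
  (forall S, P S -> (#|S| < #|T|)%N -> rlo <= Rt S <= rhi) ->
  forall S, P S -> F rhi #|S| <= VA S <= F rlo #|S|.
Proof.
move=> hlo hlohi hne hcl hR.
have hhi : 0 < rhi by exact: (lt_le_trans hlo hlohi).
suff: forall m S, P S -> (#|T| - #|S|)%N = m -> F rhi #|S| <= VA S <= F rlo #|S|.
  by move=> H S PS; exact: H _ _ PS erefl.
elim=> [|m IH] S PS hm.
  have hk := hne S PS.
  have hC : ~: S = set0.
    apply/eqP; rewrite -cards_eq0; have := cardsCs (~: S); rewrite setCK.
    have := max_card S; lia.
  rewrite VA_unfold /Rt /F hm hC !big_set0 addr0 addr0 /=.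
  by rewrite !lexx.
have hk := hne S PS.
have hkc : 0 < #|S|%:R * c by rewrite mulr_gt0 // ltr0n.
have hlt : (#|S| < #|T|)%N by lia.
have /andP [hRlo hRhi] := hR S PS hlt.
have hR0 : 0 <= Rt S by apply: le_trans (ltW hlo) hRlo.
have hden : 0 < #|S|%:R * c + Rt S by apply: (lt_le_trans hkc); rewrite lerDl.
rewrite /F hm /=.
have hm' : (#|T| - #|S|.+1)%N = m by lia.
have [x0 xl] := G_bounds m (k:=#|S|.+1) hlo isT.
have [y0 yl] := G_bounds m (k:=#|S|.+1) hhi isT.
set x := G rlo m #|S|.+1 in x0 xl *.
set y := G rhi m #|S|.+1 in y0 yl *.
have hk1 : (#|S|.+1)%:R = #|S|%:R + 1 :> R by rewrite -addn1 natrD.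
rewrite hk1 in xl yl.
have xl' : x * (#|S|%:R * c) <= ls.
  have := mulr_ge0 x0 (ltW hc). nra.
have yl' : y * (#|S|%:R * c) <= ls by have := mulr_ge0 y0 (ltW hc); nra.
have Hi : forall i, i \in ~: S -> 
   rateInto lg i S * y <= rateInto lg i S * VA (i |: S) <= rateInto lg i S * x.
  move=> i; rewrite inE => hi.
  have := rate_ge0 i S; rewrite le0r => /orP [/eqP ->|hpos]; first by rewrite !mul0r lexx.
  have PSi := hcl S i PS hi hpos.
  have hci : #|i |: S| = #|S|.+1 by rewrite cardsU1 hi.
  have := IH _ PSi; rewrite hci /F hm' => /(_ erefl) /andP [h1 h2].
  by rewrite !ler_wpM2l // ltW.
have Hup : \sum_(i in ~: S) rateInto lg i S * VA (i |: S) <= Rt S * x.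
  by rewrite /Rt mulr_suml; apply: ler_sum => i hi; case/andP: (Hi i hi).
have Hlo : Rt S * y <= \sum_(i in ~: S) rateInto lg i S * VA (i |: S).
  by rewrite /Rt mulr_suml; apply: ler_sum => i hi; case/andP: (Hi i hi).
have hid : 0 <= (#|S|%:R * c + Rt S)^-1 by rewrite invr_ge0 ltW.
rewrite VA_unfold; apply/andP; split.
  apply: (le_trans (key hkc hR0 hRhi y0 yl')).
  by apply: ler_wpM2r => //; rewrite lerD2l.
apply: le_trans (key hkc (ltW hlo) hRlo x0 xl').
by apply: ler_wpM2r => //; rewrite lerD2l.
Qed.

End Generic.


Lemma sum_ind n (p : pred nat) m :
  (\sum_(j in [set j : 'I_n | p j]) ((j : nat) == m) = (m < n) && p m)%N.
Proof.
case: (ltnP m n) => hm /=.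
  rewrite big_mkcond (bigD1 (Ordinal hm)) //= big1 ?addn0; first by rewrite inE eqxx; case: (p m).
  move=> j hj; case: ifP => // _; apply/eqP; rewrite eqb0; apply: contra hj => /eqP hj.
  by apply/eqP; apply: val_inj.
rewrite big1 // => j _; apply/eqP; rewrite eqb0; have := ltn_ord j; lia.
Qed.

Section Conc.
Variables (R : realFieldType) (n0 : nat) (lam : R).

Lemma line_lgE (i j : 'I_n0) : line_lg lam i j =
  lam / 2 * (((j : nat) == i.+1) + (0 < i) * ((j : nat) == i.-1))%N%:R.
Proof.
rewrite /line_lg; case: ifP => H.
  have -> : (((j : nat) == i.+1) + (0 < i) * ((j : nat) == i.-1))%N = 1%N by move: H; lia.
  by rewrite mulr1.
have -> : (((j : nat) == i.+1) + (0 < i) * ((j : nat) == i.-1))%N = 0%N by move: H; lia.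
by rewrite mulr0.
Qed.

Lemma ring_lgE (h3 : (3 <= n0)%N) (i j : 'I_n0) : ring_lg lam i j =
  lam / 2 * (((j : nat) == i.+1) + (0 < i) * ((j : nat) == i.-1)
     + ((i : nat) == n0.-1) * ((j : nat) == 0%N) + ((i : nat) == 0%N) * ((j : nat) == n0.-1))%N%:R.
Proof.
have hi := ltn_ord i; have hj := ltn_ord j.
rewrite /ring_lg; case: ifP => H.
  have -> : (((j : nat) == i.+1) + (0 < i) * ((j : nat) == i.-1)
     + ((i : nat) == n0.-1) * ((j : nat) == 0%N) + ((i : nat) == 0%N) * ((j : nat) == n0.-1))%N = 1%N
    by move: H; lia.
  by rewrite mulr1.
have -> : (((j : nat) == i.+1) + (0 < i) * ((j : nat) == i.-1)
     + ((i : nat) == n0.-1) * ((j : nat) == 0%N) + ((i : nat) == 0%N) * ((j : nat) == n0.-1))%N = 0%N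
  by move: H; lia.
by rewrite mulr0.
Qed.

Lemma line_rate (i : 'I_n0) (p : pred nat) :
  rateInto (line_lg lam) i [set j : 'I_n0 | p j] =
  lam / 2 * (((i.+1 < n0) && p i.+1) + (0 < i) * ((i.-1 < n0) && p i.-1))%N%:R.
Proof.
rewrite /rateInto (eq_bigr _ (fun j _ => line_lgE i j)) -mulr_sumr -natr_sum.
by rewrite big_split /= -big_distrr /= !sum_ind.
Qed.

Lemma ring_rate (h3 : (3 <= n0)%N) (i : 'I_n0) (p : pred nat) :
  rateInto (ring_lg lam) i [set j : 'I_n0 | p j] =
  lam / 2 * (((i.+1 < n0) && p i.+1) + (0 < i) * ((i.-1 < n0) && p i.-1)
    + ((i : nat) == n0.-1) * ((0 < n0) && p 0%N) + ((i : nat) == 0%N) * ((n0.-1 < n0) && p n0.-1))%N%:R.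
Proof.
rewrite /rateInto (eq_bigr _ (fun j _ => ring_lgE h3 i j)) -mulr_sumr -natr_sum.
by rewrite !big_split /= -!big_distrr /= !sum_ind.
Qed.
End Conc.

Definition linp (a k j : nat) := (a <= j < a + k)%N.

Lemma line_count n0 a k i : (a < n0)%N -> (0 < k)%N -> (i < n0)%N -> ~~ linp a k i ->
  (((i.+1 < n0) && linp a k i.+1) + (0 < i) * ((i.-1 < n0) && linp a k i.-1)
   = (0 < a) * (i == a.-1) + (i == a + k))%N.
Proof. rewrite /linp => *; lia. Qed.

Lemma ord_eqE n (i j : 'I_n) : (i == j) = ((i : nat) == j).
Proof. by []. Qed.

Lemma exists_out (T : finType) (S : {set T}) : (#|S| < #|T|)%N -> exists j, j \notin S.
Proof.
move=> h; have : (0 < #|~: S|)%N by have := cardsCs S; lia.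
by case/card_gt0P => j; rewrite inE => hj; exists j.
Qed.

Section Line.
Variables (R : realFieldType) (n0 : nat) (lam : R).
Hypothesis hlam : 0 < lam.

Definition PL (S : {set 'I_n0}) := exists a k, (a < n0)%N /\ (0 < k)%N /\ S = [set j : 'I_n0 | linp a k j].

Lemma PL_ne S : PL S -> (0 < #|S|)%N.
Proof.
case=> a [k [ha [hk ->]]]; apply/card_gt0P; exists (Ordinal ha); rewrite inE /linp /=; lia.
Qed.

Lemma PL_cl S i : PL S -> i \notin S -> 0 < rateInto (line_lg lam) i S -> PL (i |: S).
Proof.
case=> a [k [ha [hk ->]]]; rewrite inE => hi.
rewrite line_rate line_count // pmulr_rgt0 ?divr_gt0 // ltr0n => hpos.
have hi' := ltn_ord i.
case: (boolP ((0 < a) && ((i : nat) == a.-1)))%N => hc.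
  exists a.-1, k.+1; split; first lia; split => //.
  apply/setP => j; rewrite !inE ord_eqE /linp; move: hc; lia.
exists a, k.+1; split => //; split => //.
apply/setP => j; rewrite !inE ord_eqE /linp; move: hc hpos; lia.
Qed.

Lemma PL_Rt S : PL S -> (#|S| < #|'I_n0|)%N -> lam / 2 <= Rt (line_lg lam) S <= 2 * (lam / 2).
Proof.
case=> a [k [ha [hk ->]]] hlt.
have [j0] := exists_out hlt; rewrite inE => hj0.
have hj0' := ltn_ord j0.
rewrite /Rt (eq_bigr (fun i : 'I_n0 => lam / 2 * ((0 < a) * ((i : nat) == a.-1) + ((i : nat) == a + k))%N%:R)); last first.
  by move=> i; rewrite !inE => hi; rewrite line_rate line_count.
rewrite -mulr_sumr -natr_sum.
rewrite (eq_bigl (fun i : 'I_n0 => i \in [set j : 'I_n0 | ~~ linp a k j])); last first.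
  by move=> i; rewrite !inE.
rewrite big_split /= -big_distrr /= !(@sum_ind n0 (fun x => ~~ linp a k x)).
set t := (_ + _)%N.
have ht1 : (1 <= t)%N by rewrite /t; move: hj0; rewrite /linp; lia.
have ht2 : (t <= 2)%N by rewrite /t; lia.
have h1 : 1 <= t%:R :> R by rewrite ler1n.
have h2 : t%:R <= 2 :> R by rewrite ler_nat.
have hl2 : 0 < lam / 2 by rewrite divr_gt0.
apply/andP; split; nra.
Qed.
End Line.

Section ArcNat.
Local Open Scope nat_scope.
Definition arcp (n0 a k j : nat) := (a <= j < a + k) || (j + n0 < a + k).
Lemma arcp_nw n0 a k j : (a + k <= n0)%N -> arcp n0 a k j = (a <= j < a + k).
Proof. rewrite /arcp => h; have -> : (j + n0 < a + k) = false by lia. by rewrite orbF. Qed.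
Lemma arcp_w n0 a k j : (n0 <= a + k)%N -> (j < n0)%N -> arcp n0 a k j = (a <= j) || (j + n0 < a + k).
Proof. rewrite /arcp => h1 h2; have -> : (j < a + k) = true by lia. by rewrite andbT. Qed.
Lemma arc_count n0 a k i m1 m2 : (3 <= n0)%N -> (a < n0)%N -> (0 < k)%N -> (i < n0)%N -> ~~ arcp n0 a k i ->
  (a = 0 /\ m1 = n0.-1)%N \/ (0 < a /\ m1 = a.-1)%N ->
  (a + k < n0 /\ m2 = a + k)%N \/ (n0 <= a+k /\ m2 = a + k - n0)%N ->
  (((i.+1 < n0) && arcp n0 a k i.+1) + (0<i)*((i.-1<n0) && arcp n0 a k i.-1) + (i == n0.-1)*((0<n0) && arcp n0 a k 0) + (i==0)*((n0.-1 < n0) && arcp n0 a k n0.-1) = (i == m1) + (i == m2))%N.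
Proof. move=> h3 ha hk hi hni h1 [[hak ->]|[hak ->]].
  have hw : (a + k <= n0)%N by lia.
  rewrite !(@arcp_nw n0 a k _ hw) in hni *.
  case: h1 => [[a0 ->]|[a0 ->]]; [subst a|]; case: (eqVneq i n0.-1) => hin; case: (posnP i) => hi0; rewrite /=; lia.
have hn1 : (n0.-1 < n0)%N by lia.
have hi1 : (i.-1 < n0)%N by lia.
have h0 : (0 < n0)%N by lia.
rewrite (@arcp_w n0 a k _ hak hi) (@arcp_w n0 a k _ hak hi1) (@arcp_w n0 a k _ hak hn1) (@arcp_w n0 a k _ hak h0) in hni *.
case: (ltnP i.+1 n0) => hi2 /=.
  rewrite (@arcp_w n0 a k _ hak hi2).
  case: h1 => [[a0 ->]|[a0 ->]]; [subst a|]; case: (eqVneq i n0.-1) => hin; case: (posnP i) => hi0; rewrite /=; lia.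
case: h1 => [[a0 ->]|[a0 ->]]; [subst a|]; case: (eqVneq i n0.-1) => hin; case: (posnP i) => hi0; rewrite /=; lia.
Qed.

Lemma arc_kl n0 a k i : (i < n0)%N -> ~~ arcp n0 a k i -> (k < n0)%N.
Proof. rewrite /arcp; lia. Qed.

Lemma arc_m n0 a k : (a < n0)%N -> (k < n0)%N -> exists m1 m2,
  ((a = 0 /\ m1 = n0.-1)%N \/ (0 < a /\ m1 = a.-1)%N) /\
  ((a + k < n0 /\ m2 = a + k)%N \/ (n0 <= a+k /\ m2 = a + k - n0)%N).
Proof.
move=> ha hk; exists (if a == 0%N then n0.-1 else a.-1), (if (a + k < n0)%N then (a + k)%N else (a + k - n0)%N).
split; [case: eqP => ?; [left|right]; lia | case: ltnP => ?; [left|right]; lia].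
Qed.

Lemma arc_cl1 n0 a k m1 j : (3 <= n0)%N -> (a < n0)%N -> (0 < k)%N -> (k < n0)%N -> (j < n0)%N ->
  (a = 0 /\ m1 = n0.-1)%N \/ (0 < a /\ m1 = a.-1)%N ->
  ((j == m1) || arcp n0 a k j) = arcp n0 m1 k.+1 j.
Proof.
rewrite /arcp => h3 ha hk hk' hj [[a0 ->]|[a0 ->]]; case: (ltnP (a + k) n0) => ?; lia.
Qed.

Lemma arc_cl2 n0 a k m2 j : (3 <= n0)%N -> (a < n0)%N -> (0 < k)%N -> (k < n0)%N -> (j < n0)%N ->
  (a + k < n0 /\ m2 = a + k)%N \/ (n0 <= a+k /\ m2 = a + k - n0)%N ->
  ((j == m2) || arcp n0 a k j) = arcp n0 a k.+1 j.
Proof.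
rewrite /arcp => h3 ha hk hk' hj [[? ->]|[? ->]]; lia.
Qed.

Lemma arc_tot n0 a k m1 m2 : (3 <= n0)%N -> (a < n0)%N -> (0 < k)%N -> (k < n0)%N ->
  (a = 0 /\ m1 = n0.-1)%N \/ (0 < a /\ m1 = a.-1)%N ->
  (a + k < n0 /\ m2 = a + k)%N \/ (n0 <= a+k /\ m2 = a + k - n0)%N ->
  (((m1 < n0) && ~~ arcp n0 a k m1) + ((m2 < n0) && ~~ arcp n0 a k m2) = 2)%N.
Proof.
rewrite /arcp => h3 ha hk hk' [[a0 ->]|[a0 ->]] [[? ->]|[? ->]]; lia.
Qed.
End ArcNat.


Section Ring.
Variables (R : realFieldType) (n0 : nat) (lam : R).
Hypothesis hlam : 0 < lam.
Hypothesis h3 : (3 <= n0)%N.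

Definition PR (S : {set 'I_n0}) := exists a k, (a < n0)%N /\ (0 < k)%N /\ S = [set j : 'I_n0 | arcp n0 a k j].

Lemma PR_ne S : PR S -> (0 < #|S|)%N.
Proof.
case=> a [k [ha [hk ->]]]; apply/card_gt0P; exists (Ordinal ha); rewrite inE /arcp /=; lia.
Qed.

Lemma PR_cl S i : PR S -> i \notin S -> 0 < rateInto (ring_lg lam) i S -> PR (i |: S).
Proof.
case=> a [k [ha [hk ->]]]; rewrite inE => hi.
have hi' := ltn_ord i.
have hkl := arc_kl hi' hi.
have [m1 [m2 [Hm1 Hm2]]] := arc_m ha hkl.
rewrite ring_rate // (arc_count h3 ha hk hi' hi Hm1 Hm2) pmulr_rgt0 ?divr_gt0 // ltr0n => hpos.
case: (boolP ((i : nat) == m1)) => hc.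
  exists m1, k.+1; split; first by move: Hm1; lia. split => //.
  apply/setP => j; rewrite !inE ord_eqE (eqP hc); apply: arc_cl1 => //.
exists a, k.+1; split => //; split => //.
have hc2 : (i : nat) == m2 by move: hc hpos; lia.
apply/setP => j; rewrite !inE ord_eqE (eqP hc2); apply: arc_cl2 => //.
Qed.

Lemma PR_Rt S : PR S -> (#|S| < #|'I_n0|)%N -> lam <= Rt (ring_lg lam) S <= lam.
Proof.
case=> a [k [ha [hk ->]]] hlt.
have [j0] := exists_out hlt; rewrite inE => hj0.
have hj0' := ltn_ord j0.
have hkl := arc_kl hj0' hj0.
have [m1 [m2 [Hm1 Hm2]]] := arc_m ha hkl.
rewrite /Rt (eq_bigr (fun i : 'I_n0 => lam / 2 * (((i : nat) == m1) + ((i : nat) == m2))%N%:R)); last first.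
  by move=> i; rewrite !inE => hi; rewrite ring_rate // (arc_count h3 ha hk (ltn_ord i) hi Hm1 Hm2).
rewrite -mulr_sumr -natr_sum.
rewrite (eq_bigl (fun i : 'I_n0 => i \in [set j : 'I_n0 | ~~ arcp n0 a k j])); last first.
  by move=> i; rewrite !inE.
rewrite big_split /= !(@sum_ind n0 (fun x => ~~ arcp n0 a k x)) arc_tot //.
by rewrite divfK ?pnatr_eq0 // lexx.
Qed.
End Ring.

Unset Implicit Arguments. Set Strict Implicit.

Theorem mainTheorem2 (R : realFieldType) (n n0 : nat) (ls lam : R)
  (hn : (1 <= n)%N) (hls : 0 < ls) (hlam : 0 < lam) (hn0 : (3 <= n0)%N)
  (node1 : 'I_n0) (h1 : nat_of_ord node1 = 0%N) (i : 'I_n0) :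
  ringAge n ls lam node1 <= lineAge n ls lam i <= 2 * ringAge n ls lam node1.
Proof.
have hc : 0 < lam / n%:R by rewrite divr_gt0 // ltr0n.
have hl2 : 0 < lam / 2 by rewrite divr_gt0.
have hlgR : forall i j : 'I_n0, 0 <= ring_lg lam i j.
  by move=> ? ?; rewrite /ring_lg; case: ifP => _ //; rewrite ltW.
have hlgL : forall i j : 'I_n0, 0 <= line_lg lam i j.
  by move=> ? ?; rewrite /line_lg; case: ifP => _ //; rewrite ltW.
have PR1 : PR [set node1].
  exists 0%N, 1%N; split; first lia; split => //.
  by apply/setP => j; rewrite !inE ord_eqE h1 /arcp; lia.
have PL1 : PL [set i].
  exists (i : nat), 1%N; split; first exact: ltn_ord; split => //.
  by apply/setP => j; rewrite !inE ord_eqE /linp; lia.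
have Hr := bounds hc hls hlgR hlam (lexx lam) (PR_ne hlam hn0) (PR_cl hlam hn0) (PR_Rt lam hn0) PR1.
have e2 : 2 * (lam / 2) = lam by rewrite mulrC divfK // pnatr_eq0.
have hle : lam / 2 <= 2 * (lam / 2) by lra.
have Hl := bounds hc hls hlgL hl2 hle (PL_ne hlam) (PL_cl hlam) (PL_Rt hlam) PL1.
have Hd := G_double hc hls (#|'I_n0| - 1) hl2 (isT : (0 < 1)%N).
rewrite /ringAge /lineAge /nodeAge.
move: Hr Hl Hd; rewrite /F e2 !cards1 /line_l0 => /andP [r1 r2] /andP [l1 l2] Hd.
apply/andP; split.
  exact: (le_trans r2 l1).
apply: (le_trans l2); apply: (le_trans Hd).
by rewrite ler_pM2l // ltr0n.
Qed.
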